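(* Let $k\ge 1$, $l=1$, $n=k+1$, $p\in[0,1]$, $q=1-p$. Consider the binning code (the Ni code for $l=1$) whose $2^k$ bins are the pairs $\{x^n,\bar{x}^n\}$, $x^n\in\{0,1\}^n$, where $\bar{x}^n$ is the complement of $x^n$ (all bits flipped). Then its equivocation $H(M\mid Z^n)$ equals $V^*(1,k,p)$, the optimal value of the linear program $$\text{maximize } \sum_{\mathbf{r}\in\mathcal{V}} f(\mathbf{r})\,x_{\mathbf{r}}\quad\text{subject to}\quad \sum_{\mathbf{r}\in\mathcal{V}} r_j\,x_{\mathbf{r}}=\binom{n}{j}\ (j=0,\dots,n),\qquad x_{\mathbf{r}}\ge 0,$$ where $\mathcal{V}=\{\mathbf{r}\in\mathbb{Z}_{\ge0}^{n+1}:\sum_j r_j=2\}$, $\pi(\mathbf{r})=\sum_{j=0}^n r_jp^jq^{n-j}$ and $f(\mathbf{r})=-\pi(\mathbf{r})\log_2\pi(\mathbf{r})$. In particular this code attains the upper bound $V^*(1,k,p)$ on the equivocation of all binning codes with $2^k$ bins of size $2$.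
   Context: Wiretap model: a message $M$ is uniform on $\{1,\dots,2^k\}$; the encoder maps message $i$ to a codeword $X^n$ chosen uniformly at random from bin $\mathcal{B}_i$, the bins forming a partition of $\{0,1\}^n$ into sets of equal size. The eavesdropper observes $Z^n$, the output of a binary symmetric channel with crossover probability $p$ applied to $X^n$. For an observation $z^n$, $P(x^n\mid z^n)=p^{d_H(x^n,z^n)}q^{n-d_H(x^n,z^n)}$ ($d_H$ = Hamming distance), $P_{\mathcal{B}_i}(z^n)=\sum_{x^n\in\mathcal{B}_i}P(x^n\mid z^n)$, $H(M\mid Z^n=z^n)=-\sum_i P_{\mathcal{B}_i}(z^n)\log_2P_{\mathcal{B}_i}(z^n)$, and $H(M\mid Z^n)=2^{-n}\sum_{z^n}H(M\mid Z^n=z^n)$. Convention $0\log_2 0=0$. *)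

(* Defs.v *)
From HB Require Import structures.
From mathcomp Require Import all_boot all_order all_algebra.
From mathcomp Require Import all_classical all_reals all_analysis.
Set Implicit Arguments. Unset Strict Implicit. Unset Printing Implicit Defensive.
Import Order.TTheory GRing.Theory Num.Theory.
Local Open Scope ring_scope.

Section Wiretap.
Variable R : realType.

Definition log2 (t : R) : R := ln t / ln 2.
(* t |-> - t log2 t  (at t = 0 this is 0, matching 0 log 0 = 0) *)
Definition hfun (t : R) : R := - (t * log2 t).

Definition word (n : nat) := {ffun 'I_n -> bool}.

Definition dH (n : nat) (x z : word n) : nat := #|[set i | x i != z i]|.

(* P(x^n | z^n) for a BSC(p) with q = 1 - p *)
Definition Pcond (n : nat) (p : R) (x z : word n) : R :=
  p ^+ dH x z * (1 - p) ^+ (n - dH x z).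

Definition PB (n : nat) (p : R) (B : {set word n}) (z : word n) : R :=
  \sum_(x in B) Pcond p x z.

(* H(M | Z^n) for the binning code whose bins are the blocks of Pt *)
Definition equivocation (n : nat) (p : R) (Pt : {set {set word n}}) : R :=
  (2%:R ^+ n)^-1 * \sum_(z : word n) \sum_(B in Pt) hfun (PB p B z).

Definition binning_code (n m s : nat) (Pt : {set {set word n}}) : Prop :=
  finset.partition Pt [set: word n] /\ #|Pt| = m /\ forall B, B \in Pt -> #|B| = s.

Definition compl_word (n : nat) (x : word n) : word n := [ffun i => ~~ x i].

Definition ni_code (n : nat) : {set {set word n}} :=
  [set [set x; compl_word x] | x : word n].

(* candidate profiles r in Z_{>=0}^{n+1}; entries are bounded by 2 on V *)
Definition profile (n : nat) := {ffun 'I_n.+1 -> 'I_3}.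
Definition inV (n : nat) (r : profile n) : bool := (\sum_j (r j : nat) == 2)%N.

Definition piV (n : nat) (p : R) (r : profile n) : R :=
  \sum_(j < n.+1) (r j : nat)%:R * (p ^+ j * (1 - p) ^+ (n - j)).
Definition fV (n : nat) (p : R) (r : profile n) : R := hfun (piV p r).

Definition LP_feasible (n : nat) (x : profile n -> R) : Prop :=
  (forall r, inV r -> 0 <= x r) /\
  forall j : 'I_n.+1,
    \sum_(r | inV r) (r j : nat)%:R * x r = ('C(n, j))%:R.

Definition LP_obj (n : nat) (p : R) (x : profile n -> R) : R :=
  \sum_(r | inV r) fV p r * x r.

Definition LP_opt_value (n : nat) (p : R) (v : R) : Prop :=
  (exists x : profile n -> R, LP_feasible x /\ LP_obj p x = v) /\
  (forall x : profile n -> R, LP_feasible x -> LP_obj p x <= v).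

End Wiretap.

(* Main.v *)
Require Import Defs.
From HB Require Import structures.
From mathcomp Require Import all_boot all_order all_algebra.
From mathcomp Require Import all_classical all_reals all_analysis.
From mathcomp Require Import ring lra zify.
Import Order.TTheory GRing.Theory Num.Theory.
Local Open Scope ring_scope.

Section Analytic.
Variable R : realType.
Definition phi (t : R) := t * ln t.

Lemma ln_le_sub1 (t : R) : 0 < t -> ln t <= t - 1.
Proof. move=> t0; have := @le_ln1Dx R (t - 1); have -> : 1 + (t - 1) = t by ring. apply; lra. Qed.

Lemma phi_tangent (P y : R) : 0 < P -> 0 <= y ->
  phi P + (ln P + 1) * (y - P) <= phi y.
Proof.
move=> P0; rewrite le_eqVlt => /orP[/eqP<-|y0].
  rewrite /phi mul0r; nra.
have H : ln (P / y) <= P / y - 1 by apply: ln_le_sub1; exact: divr_gt0.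
rewrite ln_div ?posrE // in H.
have H2 : y * (ln P - ln y) <= y * (P / y - 1) by apply: ler_wpM2l => //; exact: ltW.
have E : y * (P / y - 1) = P - y by field; rewrite gt_eqF.
rewrite E in H2; rewrite /phi; nra.
Qed.

Lemma phi0 : phi 0 = 0. Proof. by rewrite /phi mul0r. Qed.

Lemma phi_chord (Rr P S : R) : 0 <= Rr -> Rr <= P -> P <= S ->
  (S - Rr) * phi P <= (S - P) * phi Rr + (P - Rr) * phi S.
Proof.
move=> R0 RP PS.
have [P0|P0] := eqVneq P 0.
  have -> : Rr = 0 by lra.
  by rewrite P0 phi0; lra.
have Pp : 0 < P by rewrite lt_neqAle eq_sym P0 /=; lra.
have T1 := phi_tangent _ _ Pp R0.
have T2 := phi_tangent _ _ Pp (le_trans R0 (le_trans RP PS)).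
nra.
Qed.

Lemma phi4 (Rr P Q S : R) : 0 <= Rr -> Rr <= P -> Rr <= Q -> P + Q = Rr + S ->
  phi P + phi Q <= phi Rr + phi S.
Proof.
move=> R0 RP RQ E.
have [SR|SR] := eqVneq S Rr.
  have -> : P = Rr by lra.
  have -> : Q = Rr by lra.
  by rewrite SR.
have C1 := @phi_chord Rr P S R0 RP.
have C2 := @phi_chord Rr Q S R0 RQ.
have Sp : 0 < S - Rr. rewrite subr_gt0 lt_neqAle eq_sym SR /=; lra.
have : (S - Rr) * (phi P + phi Q) <= (S - Rr) * (phi Rr + phi S).
  have h1 := C1 ltac:(lra). have h2 := C2 ltac:(lra). nra.
by rewrite ler_pM2l.
Qed.

Lemma hfunE (t : R) : hfun t = - phi t / ln 2.
Proof. by rewrite /hfun /log2 /phi mulrA mulNr. Qed.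

Lemma ln2_gt0 : 0 < ln (2 : R).
Proof. by apply: ln_gt0; lra. Qed.

Lemma H4 (x y u v : R) : 0 <= x -> 0 <= y -> 0 <= u -> 0 <= v ->
  (x - y) * (u - v) <= 0 ->
  hfun (x + v) + hfun (y + u) <= hfun (x + u) + hfun (y + v).
Proof.
move=> x0 y0 u0 v0 sg.
suff : phi (x + u) + phi (y + v) <= phi (x + v) + phi (y + u).
  rewrite !hfunE => H.
  have l2 := ln2_gt0.
  rewrite -!mulrDl ler_pM2r ?invr_gt0 //; lra.
have [xy|xy] := lerP x y; have [vu|vu] := lerP v u.
- apply: phi4; lra.
- have -> : x = y by nra. lra.
- have -> : v = u by nra. lra.
- rewrite [phi (x + v) + _]addrC; apply: phi4; lra.
Qed.
End Analytic.

Section Dual.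
Variable R : realType.
Variable n : nat.
Variable p : R.
Hypothesis p0 : 0 <= p.
Hypothesis p1 : p <= 1.

Definition a (j : nat) : R := p ^+ j * (1 - p) ^+ (n - j).
Definition W (i j : nat) : R := hfun (a i + a j).
Definition dd (t : nat) : R := W t.+1 (n - t) - W t (n - t).
Definition u (i : nat) : R := \sum_(t < i) dd t.
Definition y (i : nat) : R := (u i + W (n - i) i - u (n - i)) / 2.

Lemma a_ge0 j : 0 <= a j.
Proof. by rewrite /a mulr_ge0 // exprn_ge0 // subr_ge0. Qed.

Lemma a_step (i : nat) : (i < n)%N ->
  a i.+1 = p * (p ^+ i * (1 - p) ^+ (n - i.+1)) /\
  a i = (1 - p) * (p ^+ i * (1 - p) ^+ (n - i.+1)).
Proof.
move=> lt; rewrite /a -(subnSK lt) !exprS; split; ring.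
Qed.

Lemma mono_gen (f : nat -> R) : (forall i, (i < n)%N -> f i.+1 <= f i) ->
  forall i j, (i <= j)%N -> (j <= n)%N -> f j <= f i.
Proof.
move=> st i; elim=> [|j IH] ij jn.
  by move: ij; rewrite leqn0 => /eqP->.
move: ij; rewrite leq_eqVlt => /orP[/eqP->//|ij].
apply: le_trans (st _ jn) (IH ij (ltnW jn)).
Qed.

Lemma mono i i' j j' : (i <= i')%N -> (i' <= n)%N -> (j <= j')%N -> (j' <= n)%N ->
  0 <= (a i - a i') * (a j - a j').
Proof.
move=> ii i'n jj j'n.
have X0 t : 0 <= p ^+ t * (1 - p) ^+ (n - t.+1).
  by rewrite mulr_ge0 // exprn_ge0 // subr_ge0.
have [pq|pq] := lerP p (1 - p).
  have st : forall t, (t < n)%N -> a t.+1 <= a t.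
    by move=> t /a_step [-> ->]; apply: ler_wpM2r.
  have h1 := mono_gen _ st _ _ ii i'n; have h2 := mono_gen _ st _ _ jj j'n.
  by apply: mulr_ge0; rewrite subr_ge0.
have st' : forall t, (t < n)%N -> (fun t => - a t) t.+1 <= (fun t => - a t) t.
  move=> t tn /=; rewrite lerN2; move: tn => /a_step [-> ->].
  by apply: ler_wpM2r => //; apply: ltW.
have h1 := mono_gen _ st' _ _ ii i'n; have h2 := mono_gen _ st' _ _ jj j'n.
rewrite /= lerN2 in h1 h2.
rewrite -mulrNN; apply: mulr_ge0; lra.
Qed.

Lemma WC i j : W i j = W j i.
Proof. by rewrite /W addrC. Qed.

Lemma uS i : u i.+1 = u i + dd i.
Proof. by rewrite /u big_ord_recr. Qed.

Lemma K i b : (i <= n)%N -> (b <= n)%N -> W i (n - b) - W b (n - b) <= u i - u b.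
Proof.
move=> iN bN.
have [bi|ib] := leqP b i.
  elim: i iN bi => [|i IH] iN bi.
    by move: bi; rewrite leqn0 => /eqP->; lra.
  move: bi; rewrite leq_eqVlt => /orP[/eqP->|bi]; first by lra.
  rewrite ltnS in bi.
  have := IH (ltnW iN) bi; rewrite uS /dd.
  have := @H4 R (a i) (a i.+1) (a (n - b)) (a (n - i)) (a_ge0 _) (a_ge0 _) (a_ge0 _) (a_ge0 _).
  have M := @mono i i.+1 (n - i) (n - b) (leqnSn _) iN (leq_sub2l _ bi) (leq_subr _ _).
  have M' : (a i - a i.+1) * (a (n - b) - a (n - i)) <= 0 by rewrite -oppr_ge0 -mulrN opprB.
  move=> /(_ M'). rewrite /W. lra.
move: (ltnW ib) => {ib} ib.
elim: b bN ib => [|b IH] bN ib.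
  by move: ib; rewrite leqn0 => /eqP->; lra.
move: ib; rewrite leq_eqVlt => /orP[/eqP<-|ib]; first by lra.
have := IH (ltnW bN) ib; rewrite uS /dd.
have E : (n - b = (n - b.+1).+1)%N by rewrite subnSK.
have := @H4 R (a i) (a b.+1) (a (n - b)) (a (n - b.+1)) (a_ge0 _) (a_ge0 _) (a_ge0 _) (a_ge0 _).
have M := @mono i b.+1 (n - b.+1) (n - b) (ltnW ib) bN (leq_sub2l _ (leqnSn _)) (leq_subr _ _).
have M' : (a i - a b.+1) * (a (n - b) - a (n - b.+1)) <= 0 by rewrite -oppr_ge0 -mulrN opprB.
move=> /(_ M'). rewrite E /W. lra.
Qed.

Lemma D1 i j : (i <= n)%N -> (j <= n)%N -> W i j <= y i + y j.
Proof.
move=> iN jN.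
have := K _ _ iN (leq_subr j n); rewrite subKn //.
have := K _ _ jN (leq_subr i n); rewrite subKn //.
rewrite /y (WC j i); lra.
Qed.

Lemma D2 j : (j <= n)%N -> y j + y (n - j) = W j (n - j).
Proof.
move=> jN; rewrite /y subKn // (WC (n - j) j); lra.
Qed.

End Dual.

Section Comb.
Variable R : realType.
Variable n : nat.
Variable p : R.
Hypothesis p0 : 0 <= p.
Hypothesis p1 : p <= 1.
Hypothesis n0 : (0 < n)%N.

Local Notation a := (a R n p).
Local Notation y := (y R n p).
Local Notation W := (W R n p).

Lemma dH_le (x z : word n) : (dH x z <= n)%N.
Proof. by rewrite /dH; have := max_card [set i | x i != z i]; rewrite card_ord. Qed.

Lemma card_dist (z : word n) j : #|[set x : word n | dH x z == j]| = 'C(n, j).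
Proof.
pose f := fun x : word n => [set i | x i != z i].
pose g := fun A : {set 'I_n} => [ffun i => if i \in A then ~~ z i else z i] : word n.
have fg : cancel f g.
  move=> x; apply/ffunP => i; rewrite /f /g ffunE inE.
  by case: (x i); case: (z i).
have gf : cancel g f.
  move=> A; apply/setP => i; rewrite /f /g inE ffunE.
  by case: (i \in A); case: (z i).
have -> : [set x : word n | dH x z == j] = g @: [set A : {set 'I_n} | #|A| == j].
  rewrite (can2_imset_pre _ gf fg); apply/setP => x; rewrite !inE.
  by [].
by rewrite card_imset ?card_draws ?card_ord //; exact: can_inj gf.
Qed.

Lemma count_dist (z : word n) (F : nat -> R) :
  \sum_(x : word n) F (dH x z) = \sum_(j < n.+1) ('C(n, j))%:R * F j.
Proof.
have E x : F (dH x z) = \sum_(j < n.+1) ((dH x z == j)%:R * F j).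
  rewrite (bigD1 (Ordinal (leq_ltn_trans (dH_le x z) (ltnSn n)))) //= eqxx mul1r.
  rewrite big1 ?addr0 // => j /negbTE nj.
  suff -> : (dH x z == j) = false by rewrite mul0r.
  apply: negbTE; apply: contraFN nj => /eqP e.
  by apply/eqP/val_inj => /=.
rewrite (eq_bigr _ (fun x _ => E x)) exchange_big /=.
apply: eq_bigr => j _.
rewrite -mulr_suml -(card_dist z j).
congr (_ * _).
rewrite -sum1_card natr_sum [RHS]big_mkcond /=.
apply: eq_bigr => x _; rewrite inE.
by case: (dH x z == j).
Qed.

Lemma part_sum (Pt : {set {set word n}}) (G : word n -> R) :
  finset.cover Pt = [set: word n] -> finset.trivIset Pt ->
  \sum_(B in Pt) \sum_(x in B) G x = \sum_x G x.
Proof.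
move=> cov tri; rewrite -finset.big_trivIset // cov.
by apply: eq_bigl => x; rewrite inE.
Qed.

Lemma pair_sum (x1 x2 : word n) (G : word n -> R) : x1 != x2 ->
  \sum_(x in [set x1; x2]) G x = G x1 + G x2.
Proof.
move=> ne; rewrite big_setU1; last by rewrite inE.
by rewrite big_set1.
Qed.

Lemma bin_bound (B : {set word n}) (z : word n) : #|B| = 2%N ->
  hfun (PB p B z) <= \sum_(x in B) y (dH x z).
Proof.
move/eqP/finset.cards2P => [x1 [x2 [ne ->]]].
rewrite /PB !pair_sum //.
exact: (@D1 R n p p0 p1 _ _ (dH_le x1 z) (dH_le x2 z)).
Qed.

Lemma dH_compl (w z : word n) : dH (compl_word w) z = (n - dH w z)%N.
Proof.
rewrite /dH.
have -> : [set i | compl_word w i != z i] = ~: [set i | w i != z i].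
  apply/setP => i; rewrite !inE ffunE.
  by case: (w i); case: (z i).
by rewrite finset.cardsCs finset.setCK card_ord.
Qed.

Lemma compl_neq (w : word n) : w != compl_word w.
Proof.
apply/negP => /eqP /ffunP /(_ (Ordinal n0)); rewrite ffunE.
by case: (w _).
Qed.

Lemma ni_bin (w z : word n) :
  hfun (PB p [set w; compl_word w] z) = \sum_(x in [set w; compl_word w]) y (dH x z).
Proof.
rewrite /PB !pair_sum ?compl_neq //.
by rewrite /Pcond !dH_compl (@D2 R n p _ (dH_le w z)).
Qed.

Definition Sy := \sum_(j < n.+1) ('C(n, j))%:R * y j.

Lemma total (Pt : {set {set word n}}) : finset.cover Pt = [set: word n] -> finset.trivIset Pt ->
  (2%:R ^+ n)^-1 * \sum_(z : word n) \sum_(B in Pt) \sum_(x in B) y (dH x z) = Sy.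
Proof.
move=> cov tri.
rewrite (eq_bigr (fun z => Sy)); last first.
  by move=> z _; rewrite part_sum // count_dist.
rewrite sumr_const card_ffun card_bool card_ord -[Sy *+ _]mulr_natr natrX mulrC mulrK //.
by rewrite unitfE expf_neq0 // pnatr_eq0.
Qed.

Lemma equiv_le (Pt : {set {set word n}}) : finset.cover Pt = [set: word n] -> finset.trivIset Pt ->
  (forall B, B \in Pt -> #|B| = 2%N) -> equivocation p Pt <= Sy.
Proof.
move=> cov tri card2.
rewrite -(total Pt cov tri) /equivocation.
apply: ler_wpM2l; first by rewrite invr_ge0 exprn_ge0 // ler0n.
apply: ler_sum => z _; apply: ler_sum => B BP.
exact: bin_bound (card2 B BP).
Qed.

Lemma ni_cover : finset.cover (ni_code n) = [set: word n].
Proof.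
apply/setP => x; rewrite inE; apply/bigcupP.
exists [set x; compl_word x]; first by apply/imsetP; exists x.
by rewrite !inE eqxx.
Qed.

Lemma compl_invol (w : word n) : compl_word (compl_word w) = w.
Proof. by apply/ffunP => i; rewrite !ffunE negbK. Qed.

Lemma pairE (w t : word n) : t \in [set w; compl_word w] ->
  [set w; compl_word w] = [set t; compl_word t].
Proof.
rewrite !inE => /orP[/eqP->//|/eqP->].
by rewrite compl_invol finset.setUC.
Qed.

Lemma ni_triv : finset.trivIset (ni_code n).
Proof.
apply/finset.trivIsetP => A B /imsetP[w _ ->] /imsetP[v _ ->] neq.
rewrite -setI_eq0; apply/negPn/negP => /set0Pn [t]; rewrite inE => /andP[t1 t2].
by move: neq; rewrite (pairE _ _ t1) (pairE _ _ t2) eqxx.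
Qed.

Lemma equiv_ni : equivocation p (ni_code n) = Sy.
Proof.
rewrite -(total _ ni_cover ni_triv) /equivocation; congr (_ * _).
apply: eq_bigr => z _; apply: eq_bigr => B /imsetP[w _ ->].
exact: ni_bin.
Qed.

End Comb.

Lemma decomp (n : nat) (r : profile n) : (\sum_j (r j : nat) == 2)%N ->
  exists i j : 'I_n.+1, forall l, (r l : nat) = ((l == i) + (l == j))%N.
Proof.
move=> /eqP H.
case: (pickP (fun l => 0 < (r l : nat))%N) => [i ri|none]; last first.
  move: H; rewrite big1 // => l _; have := none l; rewrite lt0n => /negbFE/eqP//.
move: H; rewrite (bigD1 i) //= => H.
set s := (\sum_(l | l != i) _)%N in H.
have r3 : ((r i : nat) < 3)%N by [].
have [r2|r1] : (r i : nat) = 2%N \/ (r i : nat) = 1%N by lia.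
  have /eqP : s = 0%N by lia.
  rewrite /s sum_nat_eq0 => /forall_inP Z.
  exists i, i => l; case: (eqVneq l i) => [->|li]; first by rewrite r2.
  by rewrite (eqP (Z l li)).
have /eqP : s = 1%N by lia.
move=> /sum_nat_eq1 [j [ji rj Z]].
exists i, j => l; case: (eqVneq l i) => [->|li].
  by rewrite r1 eq_sym (negbTE ji).
case: (eqVneq l j) => [->|lj]; first by rewrite rj.
by rewrite (Z l lj li).
Qed.

Section LP.
Variable R : realType.
Variable n : nat.
Variable p : R.
Hypothesis p0 : 0 <= p.
Hypothesis p1 : p <= 1.
Hypothesis n0 : (0 < n)%N.

Local Notation a := (a R n p).
Local Notation y := (y R n p).
Local Notation W := (W R n p).
Local Notation Sy := (Sy R n p).

Lemma sum_ind m (i : 'I_m) (F : 'I_m -> R) : \sum_l ((l == i)%:R * F l) = F i.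
Proof.
rewrite (bigD1 i) //= eqxx mul1r big1 ?addr0 // => l /negbTE ->; by rewrite mul0r.
Qed.

Lemma sum_prof (r : profile n) (i j : 'I_n.+1) (F : 'I_n.+1 -> R) :
  (forall l, (r l : nat) = ((l == i) + (l == j))%N) ->
  \sum_l ((r l : nat)%:R * F l) = F i + F j.
Proof.
move=> E; rewrite (eq_bigr (fun l => (l == i)%:R * F l + (l == j)%:R * F l)).
  by rewrite big_split /= !sum_ind.
by move=> l _; rewrite E natrD mulrDl.
Qed.

Lemma fV_le (r : profile n) : inV r -> fV p r <= \sum_l ((r l : nat)%:R * y l).
Proof.
move=> /decomp [i [j E]].
rewrite /fV /piV (@sum_prof r i j (fun l : 'I_n.+1 => p ^+ l * (1 - p) ^+ (n - l)) E).
rewrite (@sum_prof r i j (fun l : 'I_n.+1 => y l) E).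
exact: (@D1 R n p p0 p1 _ _ (ltn_ord i) (ltn_ord j)).
Qed.

Lemma LP_bound (x : profile n -> R) : LP_feasible x -> LP_obj p x <= Sy.
Proof.
move=> [xge0 feas].
apply: (@le_trans _ _ (\sum_(r : profile n | inV r) (\sum_(l < n.+1) ((r l : nat)%:R * y l)) * x r)).
  apply: ler_sum => r rV; apply: ler_wpM2r; first exact: xge0.
  exact: fV_le.
under eq_bigr => r _ do rewrite mulr_suml.
rewrite exchange_big /=.
rewrite /Sy le_eqVlt; apply/orP; left; apply/eqP.
apply: eq_bigr => l _.
rewrite -feas mulr_suml; apply: eq_bigr => r _; exact: mulrAC.
Qed.

Definition prof2 (i j : 'I_n.+1) : profile n := [ffun l => inord ((l == i) + (l == j))].

Lemma prof2E i j l : (prof2 i j l : nat) = ((l == i) + (l == j))%N.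
Proof.
rewrite ffunE inordK //; by case: (l == i); case: (l == j).
Qed.

Lemma sum_eq_nat m (i : 'I_m) : (\sum_l ((l == i) : nat))%N = 1%N.
Proof. by rewrite (bigD1 i) //= eqxx big1 // => l /negbTE ->. Qed.

Lemma prof2V i j : inV (prof2 i j).
Proof.
rewrite /inV; apply/eqP.
under eq_bigr => l _ do rewrite prof2E.
by rewrite big_split /= !sum_eq_nat.
Qed.

Lemma sum_pick (s : profile n) (G : profile n -> R) : inV s ->
  \sum_(r | inV r) ((r == s)%:R * G r) = G s.
Proof.
move=> sV; rewrite (bigD1 s) //= eqxx mul1r big1 ?addr0 // => r /andP[_ /negbTE ->].
by rewrite mul0r.
Qed.

Definition cc (j : 'I_n.+1) : R := ('C(n, j))%:R / 2.
Definition x0 (r : profile n) : R :=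
  \sum_(j < n.+1) ((r == prof2 j (rev_ord j))%:R * cc j).

Lemma x0_sum (G : profile n -> R) :
  \sum_(r | inV r) (G r * x0 r) = \sum_(j < n.+1) (G (prof2 j (rev_ord j)) * cc j).
Proof.
under eq_bigr => r _ do rewrite /x0 mulr_sumr.
rewrite exchange_big /=; apply: eq_bigr => j _.
rewrite -(@sum_pick (prof2 j (rev_ord j)) (fun r => G r * cc j) (prof2V j (rev_ord j))).
by apply: eq_bigr => r _; rewrite mulrCA.
Qed.

Lemma cc_rev (j : 'I_n.+1) : cc (rev_ord j) = cc j.
Proof. by rewrite /cc /= subSS bin_sub // -ltnS. Qed.

Lemma x0_feas : LP_feasible x0.
Proof.
split.
  move=> r _; rewrite /x0; apply: sumr_ge0 => j _; apply: mulr_ge0 => //.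
  by rewrite /cc divr_ge0 // ler0n.
move=> l; rewrite x0_sum.
under eq_bigr => j _ do rewrite prof2E natrD mulrDl.
rewrite big_split /=.
have -> : \sum_(j < n.+1) ((l == j)%:R * cc j) = cc l.
  by under eq_bigr => j _ do rewrite eq_sym; rewrite sum_ind.
rewrite (reindex_inj rev_ord_inj) /=.
under eq_bigr => j _ do rewrite rev_ordK cc_rev.
under eq_bigr => j _ do rewrite eq_sym.
rewrite sum_ind /cc; lra.
Qed.

Lemma Sy_rev : \sum_(j < n.+1) (('C(n, j))%:R * y (n - j)) = Sy.
Proof.
rewrite (reindex_inj rev_ord_inj) /=; apply: eq_bigr => j _.
by rewrite subSS subKn ?bin_sub // -ltnS.
Qed.

Lemma x0_obj : LP_obj p x0 = Sy.
Proof.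
rewrite /LP_obj x0_sum.
have E j : fV p (prof2 j (rev_ord j)) = y j + y (n - j).
  rewrite /fV /piV (@sum_prof _ j (rev_ord j) (fun l : 'I_n.+1 => p ^+ l * (1 - p) ^+ (n - l))).
    by rewrite /= subSS (@D2 R n p j (ltn_ord j)).
  exact: prof2E.
under eq_bigr => j _ do rewrite E /cc.
have -> : Sy = (Sy + \sum_(j < n.+1) (('C(n, j))%:R * y (n - j))) / 2 by rewrite Sy_rev; lra.
rewrite /Sy -big_split /= mulr_suml; apply: eq_bigr => j _; by field.
Qed.

End LP.

Theorem lemma2 (R : realType) (k : nat) (p : R) :
  (1 <= k)%N -> 0 <= p -> p <= 1 ->
  LP_opt_value k.+1 p (equivocation p (ni_code k.+1)) /\
  (forall Pt : {set {set word k.+1}}, binning_code (2 ^ k) 2 Pt ->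
     equivocation p Pt <= equivocation p (ni_code k.+1)).
Proof.
move=> _ p0 p1.
have n0 : (0 < k.+1)%N by [].
rewrite (@equiv_ni R k.+1 p n0).
split.
  split.
    exists (x0 R k.+1); split; [exact: x0_feas | exact: x0_obj].
  by move=> x; exact: (@LP_bound R k.+1 p p0 p1 x).
move=> Pt [part [_ card2]].
move: part => /and3P [/eqP cov tri _].
exact: (@equiv_le R k.+1 p p0 p1 Pt cov tri card2).
Qed.
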